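(* Fix a constant $c>0$ and an interval $I\subset\mathbb{R}$ of finite Lebesgue measure, and write $B^h_k:=B^h_k(\chi_I)$. Let $n\geq 3$ and define $C_1(n):=[B^0_n,B^n_0]$ and, for $k\geq 2$, $C_k(n):=[B^0_n,C_{k-1}(n)]$. Then \[ C_3(n)=\beta(n)\,B^0_{2n}+N(n), \] where \[ \beta(n):=\sum_{L_1=1}^{n-1}\sum_{L_2=1}^{n-L_1} b_{L_1}(n,n)\,b_{L_2}(n,n-L_1)\,b_{n-(L_1+L_2)}\big(n,n-(L_1+L_2)\big)\in\mathbb{R}\setminus\{0\}, \] \[ N(n):=\sum_{L_1=1}^{n-1}\sum_{L_2=1}^{n-L_1}\sum_{L_3=1}^{n-(L_1+L_2)} b_{L_1}(n,n)\,b_{L_2}(n,n-L_1)\,b_{L_3}\big(n,n-(L_1+L_2)\big)\,B^{\,n-(L_1+L_2+L_3)}_{\,3n-(L_1+L_2+L_3)}, \] the triple sum running only over those $(L_1,L_2,L_3)$ with $L_1+L_2+L_3\neq n$. Consequently \[ N(n)^*=\sum_{L_1,L_2,L_3}(\text{same coefficients})\,B_{\,n-(L_1+L_2+L_3)}^{\,3n-(L_1+L_2+L_3)}. \]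
   Context: The RPQWN (renormalized powers of quantum white noise) algebra is the $*$-Lie algebra generated by symbols $B^h_k(f)$, $h,k\in\{0,1,2,\dots\}$, $f$ a test function, with involution $(B^h_k(f))^*=B^k_h(\bar f)$, linear in $f$, and commutation relations \[ [B^N_K(\bar g),B^n_k(f)]=\sum_{L=1}^{K\wedge n} b_L(K,n)\,B^{N+n-L}_{K+k-L}(\bar g f)-\sum_{L=1}^{k\wedge N} b_L(k,N)\,B^{N+n-L}_{K+k-L}(\bar g f), \] where $b_x(y,z):=\epsilon_{y,0}\,\epsilon_{z,0}\binom{y}{x}z^{(x)}c^{x-1}$, $\epsilon_{n,k}:=1-\delta_{n,k}$ ($\delta$ the Kronecker delta), $z^{(x)}:=z(z-1)\cdots(z-x+1)$ with $z^{(0)}=1$, and an empty sum is $0$. These relations arise from the white noise relations $[b_t,b_s^\dagger]=\delta(t-s)$ with the renormalization $\delta^l(t)=c^{l-1}\delta(t)$ for $l\ge2$. $\chi_I$ denotes the indicator of $I$, so $\chi_I^2=\chi_I$. *)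

(* Defs.v *)
From HB Require Import structures.
From mathcomp Require Import all_boot all_order all_algebra.
From mathcomp Require Import all_classical all_reals all_analysis.
Set Implicit Arguments. Unset Strict Implicit. Unset Printing Implicit Defensive.
Import Order.TTheory GRing.Theory Num.Theory.
Local Open Scope ring_scope.

(* b_x(y,z) = eps_{y,0} eps_{z,0} binom(y,x) z^{(x)} c^{x-1}
   (z^{(x)} is the falling factorial z ^_ x; the exponent x-1 is an integer). *)
Definition bcoef (C : numFieldType) (c : C) (x y z : nat) : C :=
  ((y != 0%N) && (z != 0%N))%:R * ('C(y, x))%:R * (z ^_ x)%:R * c ^ (x%:Z - 1).

Definition chi (R : realType) (C : numClosedFieldType) (I : interval R) : R -> C :=
  fun x => (x \in I)%:R.

(* the RPQWN structure on (L, br, star, B): a *-Lie algebra over C with elements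
   B h k f (= B^h_k(f)) for test functions f in TF, satisfying the RPQWN relations. *)
Definition is_rpqwn (C : numClosedFieldType) (c : C) (T : Type) (TF : set (T -> C))
  (L : lmodType C) (br : L -> L -> L) (star : L -> L) (B : nat -> nat -> (T -> C) -> L) : Prop :=
      (forall a x y z, br (a *: x + y) z = a *: br x z + br y z) /\
      (forall a x y z, br z (a *: x + y) = a *: br z x + br z y) /\
      (forall x, br x x = 0) /\
      (forall x y z, br x (br y z) + br y (br z x) + br z (br x y) = 0) /\
      (forall a x y, star (a *: x + y) = a^* *: star x + star y) /\
      (forall x, star (star x) = x) /\
      (forall x y, star (br x y) = br (star y) (star x)) /\
      (forall h k a f g, TF f -> TF g ->
         B h k (fun t => a * f t + g t) = a *: B h k f + B h k g) /\
      (forall h k f, TF f -> star (B h k f) = B k h (fun t => (f t)^*)) /\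
      (forall N K n k f g, TF f -> TF g ->
         br (B N K (fun t => (g t)^*)) (B n k f) =
           \sum_(1 <= L < (minn K n).+1)
              bcoef c L K n *: B (N + n - L)%N (K + k - L)%N (fun t => (g t)^* * f t)
         - \sum_(1 <= L < (minn k N).+1)
              bcoef c L k N *: B (N + n - L)%N (K + k - L)%N (fun t => (g t)^* * f t)).

(* Cseq 0 = B^n_0, Cseq (k+1) = [B^0_n, Cseq k]; so Cseq k = C_k(n) for k >= 1 *)
Fixpoint Cseq (C : numClosedFieldType) (L : lmodType C) (br : L -> L -> L)
   (Bc : nat -> nat -> L) (n k : nat) : L :=
  match k with
  | 0 => Bc n 0%N
  | k'.+1 => br (Bc 0%N n) (Cseq br Bc n k')
  end.

(* Main.v *)
Require Import Defs.
From HB Require Import structures.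
From mathcomp Require Import all_boot all_order all_algebra.
From mathcomp Require Import all_classical all_reals all_analysis.
Import Order.TTheory GRing.Theory Num.Theory.
Local Open Scope ring_scope.
From mathcomp Require Import zify.

Lemma bcoef_ge0 (C : numClosedFieldType) (c : C) x y z :
  0 < c -> 0 <= bcoef c x y z.
Proof.
move=> c0; rewrite /bcoef; apply: mulr_ge0; last exact: ltW (exprz_gt0 _ c0).
by rewrite -!natrM ler0n.
Qed.

Lemma bcoef_gt0 (C : numClosedFieldType) (c : C) x y z :
  0 < c -> (0 < y)%N -> (0 < z)%N -> (x <= y)%N -> (x <= z)%N ->
  0 < bcoef c x y z.
Proof.
move=> c0 hy hz hxy hxz; rewrite /bcoef -!lt0n hy hz /=.
rewrite mulr_gt0 ?exprz_gt0 // -!natrM ltr0n !muln_gt0 bin_gt0 ffact_gt0.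
by rewrite hxy hxz.
Qed.

Section Lin.
Variables (C : numClosedFieldType) (L : lmodType C).

Lemma lin_sum (f : L -> L) (fl : forall a x y, f (a *: x + y) = a *: f x + f y)
  (I : Type) (r : seq I) (P : pred I) (F : I -> L) :
  f (\sum_(i <- r | P i) F i) = \sum_(i <- r | P i) f (F i).
Proof.
have f0 : f 0 = 0.
  have h := fl 1 0 0; rewrite scaler0 addr0 scale1r in h.
  by apply: (addrI (f 0)); rewrite addr0 -h.
have fD : {morph f : x y / x + y}.
  by move=> x y; rewrite -[x in f (x + _)]scale1r fl scale1r.
exact: (big_morph f fD f0).
Qed.

Lemma lin_scale (f : L -> L) (fl : forall a x y, f (a *: x + y) = a *: f x + f y) a x :
  f (a *: x) = a *: f x.
Proof.
have f0 : f 0 = 0.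
  have h := fl 1 0 0; rewrite scaler0 addr0 scale1r in h.
  by apply: (addrI (f 0)); rewrite addr0 -h.
by rewrite -[a *: x]addr0 fl f0 addr0.
Qed.

Lemma alin_sum (f : L -> L) (fl : forall a x y, f (a *: x + y) = a^* *: f x + f y)
  (I : Type) (r : seq I) (P : pred I) (F : I -> L) :
  f (\sum_(i <- r | P i) F i) = \sum_(i <- r | P i) f (F i).
Proof.
have f0 : f 0 = 0.
  have h := fl 1 0 0; rewrite scaler0 addr0 conjC1 scale1r in h.
  by apply: (addrI (f 0)); rewrite addr0 -h.
have fD : {morph f : x y / x + y}.
  by move=> x y; rewrite -[x in f (x + _)]scale1r fl conjC1 scale1r.
exact: (big_morph f fD f0).
Qed.

Lemma alin_scale (f : L -> L) (fl : forall a x y, f (a *: x + y) = a^* *: f x + f y) a x :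
  f (a *: x) = a^* *: f x.
Proof.
have f0 : f 0 = 0.
  have h := fl 1 0 0; rewrite scaler0 addr0 conjC1 scale1r in h.
  by apply: (addrI (f 0)); rewrite addr0 -h.
by rewrite -[a *: x]addr0 fl f0 addr0.
Qed.
End Lin.

Theorem lemma1 (R : realType) (C : numClosedFieldType) (c : C) (I : interval R)
  (L : lmodType C) (TF : set (R -> C)) (br : L -> L -> L) (star : L -> L)
  (B : nat -> nat -> (R -> C) -> L) :
  0 < c ->
  (lebesgue_measure [set` I] < +oo)%E ->
  TF (chi C I) ->
  is_rpqwn c TF br star B ->
  forall n : nat, (3 <= n)%N ->
  let Bc := fun h k => B h k (chi C I) in
  let beta := \sum_(1 <= L1 < n) \sum_(1 <= L2 < (n - L1).+1)
       bcoef c L1 n n * bcoef c L2 n (n - L1)%N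
         * bcoef c (n - (L1 + L2))%N n (n - (L1 + L2))%N in
  let Nn := \sum_(1 <= L1 < n) \sum_(1 <= L2 < (n - L1).+1)
       \sum_(1 <= L3 < (n - (L1 + L2)).+1 | (L1 + L2 + L3 != n)%N)
       (bcoef c L1 n n * bcoef c L2 n (n - L1)%N * bcoef c L3 n (n - (L1 + L2))%N)
         *: Bc (n - (L1 + L2 + L3))%N (3 * n - (L1 + L2 + L3))%N in
  [/\ Cseq br Bc n 3 = beta *: Bc 0%N (2 * n)%N + Nn,
      beta != 0 &
      star Nn = \sum_(1 <= L1 < n) \sum_(1 <= L2 < (n - L1).+1)
       \sum_(1 <= L3 < (n - (L1 + L2)).+1 | (L1 + L2 + L3 != n)%N)
       (bcoef c L1 n n * bcoef c L2 n (n - L1)%N * bcoef c L3 n (n - (L1 + L2))%N)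
         *: Bc (3 * n - (L1 + L2 + L3))%N (n - (L1 + L2 + L3))%N].
Proof.
move=> c0 _ TFchi [brl [brr [brxx [jac [stl [stst [stbr [Blin [Bstar Bcomm]]]]]]]]] n n3 Bc beta Nn.
have chiC : (fun t => (chi C I t)^*) = chi C I.
  by apply: funext => t; rewrite /chi conjC_nat.
have chiM : (fun t => (chi C I t)^* * chi C I t) = chi C I.
  by apply: funext => t; rewrite /chi conjC_nat; case: (t \in I); rewrite /= ?mul0r ?mulr1.
have bcomm0 : forall K m k, br (Bc 0%N K) (Bc m k) =
    \sum_(1 <= L < (minn K m).+1) bcoef c L K m *: Bc (m - L)%N (K + k - L)%N.
  move=> K m k; have := Bcomm 0%N K m k (chi C I) (chi C I) TFchi TFchi.
  rewrite chiC chiM minn0 (@big_geq _ _ _ 1 1) // subr0 => ->.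
  by apply: eq_bigr => i _; rewrite add0n.
have brsum := @lin_sum _ _ _ (fun a x y => brr a x y (Bc 0%N n)).
have brZ := @lin_scale _ _ _ (fun a x y => brr a x y (Bc 0%N n)).
have C3 : Cseq br Bc n 3 =
  \sum_(1 <= L1 < n.+1) \sum_(1 <= L2 < (n - L1).+1)
    \sum_(1 <= L3 < (n - L1 - L2).+1)
     (bcoef c L1 n n * bcoef c L2 n (n - L1)%N * bcoef c L3 n (n - L1 - L2)%N)
      *: Bc (n - L1 - L2 - L3)%N (n + (n + (n - L1) - L2) - L3)%N.
  have C1 : Cseq br Bc n 1 = \sum_(1 <= L1 < n.+1) bcoef c L1 n n *: Bc (n - L1)%N (n - L1)%N.
    rewrite /= bcomm0 minnn; apply: eq_bigr => L1 _; by rewrite addn0.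
  have C2 : Cseq br Bc n 2 = \sum_(1 <= L1 < n.+1) \sum_(1 <= L2 < (n - L1).+1)
      (bcoef c L1 n n * bcoef c L2 n (n - L1)%N) *: Bc (n - L1 - L2)%N (n + (n - L1) - L2)%N.
    change (Cseq br Bc n 2) with (br (Bc 0%N n) (Cseq br Bc n 1)).
    rewrite C1 brsum; apply: eq_bigr => L1 _.
    rewrite brZ bcomm0 (minn_idPr (leq_subr _ _)) scaler_sumr.
    apply: eq_bigr => L2 _; by rewrite scalerA.
  change (Cseq br Bc n 3) with (br (Bc 0%N n) (Cseq br Bc n 2)).
  rewrite C2 brsum; apply: eq_bigr => L1 _; rewrite brsum; apply: eq_bigr => L2 _.
  rewrite brZ bcomm0.
  have -> : minn n (n - L1 - L2) = (n - L1 - L2)%N by lia.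
  rewrite scaler_sumr.
  apply: eq_bigr => L3 _; by rewrite scalerA.
split.
- have n1 : (1 <= n)%N by lia.
  rewrite C3 /beta /Nn big_nat_recr //= subnn (@big_geq _ _ _ 1 1) // addr0.
  rewrite scaler_suml -big_split; apply: eq_big_nat => L1 /andP[h1 h2].
  rewrite scaler_suml -big_split; apply: eq_big_nat => L2 /andP[h3 h4].
  have e12 : (n - L1 - L2 = n - (L1 + L2))%N by lia.
  rewrite e12 [LHS](bigID (fun L3 => L1 + L2 + L3 != n)%N) /= [LHS]addrC.
  congr (_ + _); last first.
    apply: eq_bigr => L3 _; congr (_ *: Bc _ _); lia.
  case E: (n - (L1 + L2))%N => [|m].
    rewrite big_geq // /bcoef /= andbF !mul0r mulr0 scale0r //.
  rewrite big_mkcond big_nat_recr //= big1_seq ?add0r; last first.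
    move=> i /andP[_]; rewrite mem_index_iota => /andP[hi1 hi2].
    by have -> : (L1 + L2 + i != n)%N = true by apply/eqP; lia.
  have -> : (L1 + L2 + m.+1 != n)%N = false by apply/negbTE/negPn/eqP; lia.
  congr (_ *: Bc _ _); lia.
- apply: lt0r_neq0; rewrite /beta big_ltn; last by lia.
  apply: (lt_le_trans _ (ler_wpDr _ (lexx _))); last first.
    apply: sumr_ge0 => i _; apply: sumr_ge0 => j _.
    by apply: mulr_ge0; [apply: mulr_ge0|]; apply: bcoef_ge0.
  rewrite big_ltn; last by lia.
  apply: (lt_le_trans _ (ler_wpDr _ (lexx _))); last first.
    by apply: sumr_ge0 => j _; apply: mulr_ge0; [apply: mulr_ge0|]; apply: bcoef_ge0.
  by apply: mulr_gt0; [apply: mulr_gt0|]; apply: bcoef_gt0 => //; lia.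
- have stsum := @alin_sum _ _ _ stl; have stZ := @alin_scale _ _ _ stl.
  rewrite /Nn stsum; apply: eq_bigr => L1 _; rewrite stsum; apply: eq_bigr => L2 _.
  rewrite stsum; apply: eq_bigr => L3 _.
  rewrite stZ geC0_conj; last by apply: mulr_ge0; [apply: mulr_ge0|]; apply: bcoef_ge0.
  by rewrite /Bc Bstar // chiC.
Qed.
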